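(* Let $2\le n<m$, $Q=\sum_{i\in[m]}q_i\mathrm B(\sigma_i)\in\mathbb B_m^*$ with all $q_i>0$ and $0\le\sigma_1<\cdots<\sigma_m\le1/2$, and let $D=D_Q(i_2,\dots,i_n;s_2,\dots,s_n)=\sum_{j\in[n]}p_j\mathrm B(\varepsilon_j)$ be a $2n$-P$^*$-degradation of $Q$ (so $0\le\varepsilon_1<\cdots<\varepsilon_n\le1/2$). Let $2\le k\le n$. 1. If $\varepsilon_{k-1}=0$, then $k=2$, $\sigma_1=0$, $p_1=q_1$, and the splitting pattern $(i_2,s_2)$ is $(2,q_2)$ or, equivalently, $(1,0)$ (i.e. the first block consists exactly of $q_1\mathrm B(\sigma_1)$). 2. If $\varepsilon_k=1/2$, then $k=n$, $\sigma_m=1/2$, $p_n=q_m$, and the splitting pattern $(i_n,s_n)$ is $(m-1,0)$ or, equivalently, $(m,q_m)$ (i.e. the last block consists exactly of $q_m\mathrm B(\sigma_m)$). 3. Suppose $0<\varepsilon_{k-1}<\varepsilon_k<1/2$. (a) If $s_k>0$ and $\sigma_{i_k}\le\phi(\varepsilon_{k-1},\varepsilon_k)$, then the channel $D'$ obtained from $D$ by replacing $s_k$ with $0$ (all other splitting patterns unchanged) satisfies $I(D')>I(D)$. (b) If $s_k<q_{i_k}$ and $\sigma_{i_k}\ge\phi(\varepsilon_{k-1},\varepsilon_k)$, then the channel $D''$ obtained from $D$ by replacing $s_k$ with $q_{i_k}$ satisfies $I(D'')>I(D)$.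
   Context: A BIDMC $W$ has input uniform on $\{0,1\}$, discrete output alphabet $\mathcal Y$ and transition probabilities $\Pr(y\mid x)$; its LR-profile is $P_W(\varepsilon)=\Pr\big(\mathcal L_W(y)=\varepsilon/(1-\varepsilon)\big)$ with $\mathcal L_W(\hat y)=\Pr(y=\hat y\mid x=0)/\Pr(y=\hat y\mid x=1)$, and $W\cong W'$ if LR-profiles coincide; channel identities are up to $\cong$. $W'\preccurlyeq W$ if there is a channel $T$ from the output alphabet of $W$ to that of $W'$ with $\Pr(y'\mid x'=a)=\sum_{y}\Pr(y\mid x=a)T(y'\mid y)$. $\mathrm B(\varepsilon)$ is the BSC with crossover probability $\varepsilon$; $\sum_iq_iW_i$ denotes the random switching channel (use $W_i$ with probability $q_i$ independently of the input and output the index $i$ along with the output). $\mathbb B_n$ is the set of BIDMCs equivalent to $\sum_{i\in[n]}p_i\mathrm B(\varepsilon_i)$ for a probability vector $(p_i)$ and $\varepsilon_i\in[0,1]$; $\mathbb B_n^*=\mathbb B_n\setminus\mathbb B_{n-1}$. $P_\epsilon(W)=\frac12\sum_{y}\min\{\Pr(y\mid x=0),\Pr(y\mid x=1)\}$; $I(W)$ is the symmetric capacity (mutual information between uniform input and output, base-2 logarithms); for $\sum_ip_i\mathrm B(\varepsilon_i)$ it equals $1-\sum_ip_ih(\varepsilon_i)$ with $h$ the binary entropy function. For a symmetric BIDMC $Q$ and $n\ge1$, $W$ is a $2n$-P-degradation of $Q$ if $W\in\mathbb B_n$, $W\preccurlyeq Q$ and $P_\epsilon(W)=\min\{P_\epsilon(W'):W'\in\mathbb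 B_n,\ W'\preccurlyeq Q\}$. Construction of $D_Q$: put $q_0=q_{m+1}=0$. Given integers $1\le i_2<\cdots<i_n\le m$ and reals $s_j\in[0,q_{i_j}]$, set $i_1=0$, $s_1=0$, $i_{n+1}=m+1$, $s_{n+1}=0$, and for $j\in[n]$ $$p_j=s_j+(q_{i_{j+1}}-s_{j+1})+\sum_{i_j<i<i_{j+1}}q_i,\qquad p_j\varepsilon_j=s_j\sigma_{i_j}+(q_{i_{j+1}}-s_{j+1})\sigma_{i_{j+1}}+\sum_{i_j<i<i_{j+1}}q_i\sigma_i$$ (terms with weight $0$ contribute $0$). Then $D_Q(i_2,\dots,i_n;s_2,\dots,s_n)=\sum_{j\in[n]:p_j>0}p_j\mathrm B(\varepsilon_j)$; the pairs $(i_j,s_j)$ are its splitting patterns. Such a channel is a $2n$-P$^*$-degradation of $Q$ if (i) all $p_j>0$ and $0\le\varepsilon_1<\cdots<\varepsilon_n\le1/2$; (ii) it is a $2n$-P-degradation of $Q$; (iii) for every $j\in[n]$ with $i_{j+1}=i_j+1$: if $s_j=0$ then $s_{j+1}=0$, and if $s_{j+1}=q_{i_{j+1}}$ then $s_j=q_{i_j}$. For $0<\varepsilon_1<\varepsilon_2<1/2$, $\phi(\varepsilon_1,\varepsilon_2)=\ln\big((1-\varepsilon_1)/(1-\varepsilon_2)\big)\big/\ln\big(((1-\varepsilon_1)\varepsilon_2)/((1-\varepsilon_2)\varepsilon_1)\big)$. *)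

(* Defs.v *)
From HB Require Import structures.
From mathcomp Require Import all_boot all_order all_algebra.
From mathcomp Require Import reals exp.
Set Implicit Arguments. Unset Strict Implicit. Unset Printing Implicit Defensive.
Import Order.TTheory GRing.Theory Num.Theory.
Local Open Scope ring_scope.

(* A binary-input channel with finite output alphabet [out]:
   [tr x y] = Pr(y | x), input x : bool (false = 0, true = 1). *)
Record chan (R : realType) := Chan { out : finType; tr : bool -> out -> R }.
Arguments Chan {R} out tr.
Arguments out {R}.
Arguments tr {R}.

Section Chan.
Variable R : realType.

Definition bidmc (W : chan R) : Prop :=
  (forall x y, 0 <= tr W x y) /\ (forall x, \sum_(y : out W) tr W x y = 1).

(* LR-profile: P_W(e) = Pr(L_W(y) = e/(1-e)) under uniform input, where
   L_W(y) = W(y|0)/W(y|1) (value +oo when W(y|1)=0 < W(y|0), matching e=1).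
   The equation L_W(y) = e/(1-e) is written cross-multiplied. *)
Definition LRprofile (W : chan R) (e : R) : R :=
  \sum_(y : out W | tr W false y * (1 - e) == tr W true y * e)
     (tr W false y + tr W true y) / 2.

Definition chan_equiv (W W' : chan R) : Prop :=
  forall e, 0 <= e <= 1 -> LRprofile W e = LRprofile W' e.

Definition degraded (W' W : chan R) : Prop :=
  exists T : out W -> out W' -> R,
    (forall y y', 0 <= T y y') /\ (forall y, \sum_(y' : out W') T y y' = 1) /\
    (forall (a : bool) (y' : out W'), tr W' a y' = \sum_(y : out W) tr W a y * T y y').

(* Random switching channel \sum_{i in [n]} p_i B(e_i) (indices shifted to 'I_n);
   output is the pair (index, output of the BSC). *)
Definition mixBSC (n : nat) (p e : 'I_n -> R) : chan R :=
  Chan ('I_n * bool)%type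
    (fun x iy => p iy.1 * (if iy.2 == x then 1 - e iy.1 else e iy.1)).

Definition inB (n : nat) (W : chan R) : Prop :=
  exists p e : 'I_n -> R,
    (forall i, 0 <= p i) /\ \sum_i p i = 1 /\ (forall i, 0 <= e i <= 1) /\
    chan_equiv W (mixBSC p e).

Definition inBstar (n : nat) (W : chan R) : Prop := inB n W /\ ~ inB n.-1 W.

Definition Peps (W : chan R) : R :=
  (\sum_(y : out W) Num.min (tr W false y) (tr W true y)) / 2.

Definition log2 (x : R) : R := ln x / ln 2.

(* Symmetric capacity: mutual information between a uniform input and the
   output (base-2 logarithm, convention 0 log 0 = 0). *)
Definition Icap (W : chan R) : R :=
  \sum_(x : bool) \sum_(y : out W)
     (if tr W x y == 0 then 0
      else (tr W x y / 2) * log2 (tr W x y / ((tr W false y + tr W true y) / 2))).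

Definition Pdegradation (n : nat) (Q W : chan R) : Prop :=
  bidmc W /\ inB n W /\ degraded W Q /\
  forall W' : chan R, bidmc W' -> inB n W' -> degraded W' Q -> Peps W <= Peps W'.

(* ---- Construction of D_Q.  Everything is 1-based as in the paper:
   q, sigma : nat -> R with meaningful values at 1..m;
   idx j = i_j and s j = s_j for j = 2..n. *)

Definition qext (m : nat) (q : nat -> R) (i : nat) : R :=
  if (1 <= i <= m)%N then q i else 0.

Definition iext (m n : nat) (idx : nat -> nat) (j : nat) : nat :=
  if j == 1%N then 0%N else if j == n.+1 then m.+1 else idx j.

Definition sext (n : nat) (s : nat -> R) (j : nat) : R :=
  if (j == 1%N) || (j == n.+1) then 0 else s j.

Definition DQ_params (m n : nat) (q : nat -> R) (idx : nat -> nat) (s : nat -> R) : Prop :=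
  (1 <= idx 2)%N /\ (forall j, (2 <= j)%N -> (j < n)%N -> (idx j < idx j.+1)%N) /\
  (idx n <= m)%N /\ (forall j, (2 <= j <= n)%N -> 0 <= s j <= q (idx j)).

Definition DQ_p (m n : nat) (q : nat -> R) (idx : nat -> nat) (s : nat -> R) (j : nat) : R :=
  let i := iext m n idx in let sx := sext n s in let qx := qext m q in
  sx j + (qx (i j.+1) - sx j.+1) + \sum_((i j).+1 <= t < i j.+1) qx t.

(* p_j * eps_j (terms with weight 0 contribute 0) *)
Definition DQ_pe (m n : nat) (q sigma : nat -> R) (idx : nat -> nat) (s : nat -> R)
    (j : nat) : R :=
  let i := iext m n idx in let sx := sext n s in let qx := qext m q in
  (if sx j == 0 then 0 else sx j * sigma (i j)) +
  (if qx (i j.+1) - sx j.+1 == 0 then 0 else (qx (i j.+1) - sx j.+1) * sigma (i j.+1)) +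
  \sum_((i j).+1 <= t < i j.+1) qx t * sigma t.

(* eps_j (only meaningful when p_j > 0) *)
Definition DQ_eps (m n : nat) (q sigma : nat -> R) (idx : nat -> nat) (s : nat -> R)
    (j : nat) : R :=
  DQ_pe m n q sigma idx s j / DQ_p m n q idx s j.

Definition Qchan (m : nat) (q sigma : nat -> R) : chan R :=
  mixBSC (fun i : 'I_m => q i.+1) (fun i : 'I_m => sigma i.+1).

(* D_Q(i_2..i_n; s_2..s_n) = \sum_j p_j B(eps_j).  Components with p_j = 0
   are kept with weight 0; they never occur in a P*-degradation and contribute
   nothing to Icap. *)
Definition DQ (m n : nat) (q sigma : nat -> R) (idx : nat -> nat) (s : nat -> R) : chan R :=
  mixBSC (fun j : 'I_n => DQ_p m n q idx s j.+1)
         (fun j : 'I_n => DQ_eps m n q sigma idx s j.+1).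

Definition PstarDegradation (m n : nat) (q sigma : nat -> R) (idx : nat -> nat)
    (s : nat -> R) : Prop :=
  let p := DQ_p m n q idx s in let e := DQ_eps m n q sigma idx s in
  let i := iext m n idx in let sx := sext n s in let qx := qext m q in
  ((forall j, (1 <= j <= n)%N -> 0 < p j) /\ 0 <= e 1%N /\
   (forall j, (1 <= j)%N -> (j < n)%N -> e j < e j.+1) /\ e n <= 1 / 2) /\
  Pdegradation n (Qchan m q sigma) (DQ m n q sigma idx s) /\
  (forall j, (1 <= j <= n)%N -> i j.+1 = (i j).+1 ->
     (sx j = 0 -> sx j.+1 = 0) /\ (sx j.+1 = qx (i j.+1) -> sx j = qx (i j))).

Definition phi (e1 e2 : R) : R :=
  ln ((1 - e1) / (1 - e2)) / ln (((1 - e1) * e2) / ((1 - e2) * e1)).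

Definition s_upd (s : nat -> R) (k : nat) (v : R) : nat -> R :=
  fun j => if j == k then v else s j.

End Chan.

(* Main.v *)
Require Import Defs.
From HB Require Import structures.
From mathcomp Require Import all_boot all_order all_algebra.
From mathcomp Require Import reals exp sequences.
From mathcomp Require Import ring lra zify.
Import Order.TTheory GRing.Theory Num.Theory.
Local Open Scope ring_scope.

Section Aux.
Variable R : realType.

Lemma ln_lt_sub1 (z : R) : 0 < z -> z != 1 -> ln z < z - 1.
Proof.
move=> z0 z1.
have hu : ln z != 0 by rewrite ln_eq0.
have := expR_gt1Dx hu; rewrite lnK ?posrE //; lra.
Qed.

Lemma ln_le_sub1 (z : R) : 0 < z -> ln z <= z - 1.
Proof.
move=> z0; have [->|z1] := eqVneq z 1; first by rewrite ln1; lra.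
by apply/ltW/ln_lt_sub1.
Qed.

Lemma gibbs1 (x y : R) : 0 <= x -> 0 < y ->
  x - y <= x * (ln (2 * x) - ln 2 - ln y) /\
  (x != y -> x - y < x * (ln (2 * x) - ln 2 - ln y)).
Proof.
move=> x0 y0; have [->|xp] := eqVneq x 0.
  rewrite mul0r; split; [lra | move=> _; lra].
have xp' : 0 < x by rewrite lt_def xp.
have e : ln (2 * x) - ln 2 - ln y = - ln (y / x).
  rewrite lnM ?posrE // ln_div ?posrE //; lra.
rewrite e.
have yx : 0 < y / x by rewrite divr_gt0.
split.
  have := ln_le_sub1 _ yx => h.
  have : x * ln (y / x) <= x * (y / x - 1) by rewrite ler_pM2l.
  rewrite mulrBr mulrCA divff // mulr1; lra.
move=> xy.
have h := ln_lt_sub1 _ yx.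
have : y / x != 1.
  apply/eqP => /(congr1 (fun t => t * x)); rewrite divfK // mul1r => ey.
  by move: xy; rewrite ey eqxx.
move=> /h {}h.
have : x * ln (y / x) < x * (y / x - 1) by rewrite ltr_pM2l.
rewrite mulrBr mulrCA divff // mulr1; lra.
Qed.


Definition Vb (p e : R) := p * ((1 - e) * ln (2 * (1 - e)) + e * ln (2 * e)).
Definition Tc (a b c : R) := a * ln 2 + b * ln c + (a - b) * ln (1 - c).

Lemma gibbs (A B c : R) : 0 <= B -> B <= A -> 0 < c < 1 ->
  Tc A B c <= Vb A (B / A) /\ (0 < A -> B != c * A -> Tc A B c < Vb A (B / A)).
Proof.
move=> B0 BA /andP[c0 c1].
have [A0|Ap] := eqVneq A 0.
  have -> : B = 0 by apply/le_anti; rewrite B0 -A0 BA.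
  rewrite /Tc /Vb A0; split; [ | move=> h]; last by move: h; rewrite ltxx.
  rewrite !(mul0r, subr0, sub0r, mulr0); lra.
have Ap' : 0 < A by rewrite lt_def Ap /= (le_trans B0 BA).
set e := B / A.
have eB : B = e * A by rewrite /e divfK.
have e0 : 0 <= e by rewrite /e divr_ge0 // ltW.
have e1 : e <= 1 by rewrite /e ler_pdivrMr // mul1r.
have [h1 s1] := gibbs1 _ _ e0 c0.
have [h2 s2] := @gibbs1 (1 - e) (1 - c) ltac:(lra) ltac:(lra).
have E : Vb A e - Tc A B c = A * (e * (ln (2 * e) - ln 2 - ln c) +
     (1 - e) * (ln (2 * (1 - e)) - ln 2 - ln (1 - c))).
  rewrite /Vb /Tc eB; ring.
split.
  rewrite -subr_ge0 E; apply: mulr_ge0; [exact: ltW | lra].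
move=> _ neq.
have ec : e != c by apply/eqP => ec; move: neq; rewrite eB ec eqxx.
have := s1 ec => s1'.
rewrite -subr_gt0 E; apply: mulr_gt0 => //; lra.
Qed.


Lemma Vb_eq (a c : R) : 0 < c < 1 -> Vb a c = Tc a (c * a) c.
Proof.
move=> /andP[c0 c1]; rewrite /Vb /Tc.
rewrite !lnM ?posrE ?subr_gt0 //; ring.
Qed.

Lemma core (a1 a2 e1 e2 d sg : R) :
  0 < a1 -> 0 < a2 -> 0 < e1 < 1 -> 0 < e2 < 1 -> e1 != e2 -> d != 0 ->
  0 <= e1 * a1 + d * sg -> e1 * a1 + d * sg <= a1 + d ->
  0 <= e2 * a2 - d * sg -> e2 * a2 - d * sg <= a2 - d ->
  0 <= d * ((sg * ln e1 + (1 - sg) * ln (1 - e1)) - (sg * ln e2 + (1 - sg) * ln (1 - e2))) ->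
  Vb a1 e1 + Vb a2 e2 <
  Vb (a1 + d) ((e1 * a1 + d * sg) / (a1 + d)) + Vb (a2 - d) ((e2 * a2 - d * sg) / (a2 - d)).
Proof.
move=> a10 a20 he1 he2 e12 d0 B10 B1A B20 B2A hT.
have [g1 s1] := gibbs _ _ _ B10 B1A he1.
have [g2 s2] := gibbs _ _ _ B20 B2A he2.
rewrite (Vb_eq a1 _ he1) (Vb_eq a2 _ he2).
have E1 : Tc (a1 + d) (e1 * a1 + d * sg) e1 = Tc a1 (e1 * a1) e1 +
   d * ln 2 + d * (sg * ln e1 + (1 - sg) * ln (1 - e1)) by rewrite /Tc; ring.
have E2 : Tc (a2 - d) (e2 * a2 - d * sg) e2 = Tc a2 (e2 * a2) e2 -
   d * ln 2 - d * (sg * ln e2 + (1 - sg) * ln (1 - e2)) by rewrite /Tc; ring.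
have Z1 : a1 + d = 0 -> sg = e1.
  move=> h; have hd : d = - a1 by lra.
  rewrite hd in B10 B1A; have : a1 * (e1 - sg) = 0 by lra.
  move/eqP; rewrite mulf_eq0 (gt_eqF a10) /= subr_eq0 => /eqP ->; done.
have Z2 : a2 - d = 0 -> sg = e2.
  move=> h; have hd : d = a2 by lra.
  rewrite hd in B20 B2A; have : a2 * (e2 - sg) = 0 by lra.
  move/eqP; rewrite mulf_eq0 (gt_eqF a20) /= subr_eq0 => /eqP ->; done.
have [sge1|sge1] := eqVneq sg e1.
  have sge2 : sg != e2 by rewrite sge1.
  have A2p : 0 < a2 - d.
    rewrite lt_def (le_trans B20 B2A) andbT; apply/eqP => /Z2 h.
    by move: sge2; rewrite h eqxx.
  have ne : e2 * a2 - d * sg != e2 * (a2 - d).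
    apply/eqP => h; have : d * (e2 - sg) = 0 by lra.
    move/eqP; rewrite mulf_eq0 (negbTE d0) /= subr_eq0 => /eqP h'.
    by move: sge2; rewrite h' eqxx.
  have := s2 A2p ne; lra.
have A1p : 0 < a1 + d.
  rewrite lt_def (le_trans B10 B1A) andbT; apply/eqP => /Z1 h.
  by move: sge1; rewrite h eqxx.
have ne : e1 * a1 + d * sg != e1 * (a1 + d).
  apply/eqP => h; have : d * (sg - e1) = 0 by lra.
  move/eqP; rewrite mulf_eq0 (negbTE d0) /= subr_eq0 => /eqP h'.
  by move: sge1; rewrite h' eqxx.
have := s1 A1p ne; lra.
Qed.


Lemma Tdiff (e1 e2 sg : R) : 0 < e1 -> e1 < e2 -> e2 < 1 ->
  (sg * ln e1 + (1 - sg) * ln (1 - e1)) - (sg * ln e2 + (1 - sg) * ln (1 - e2)) =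
  ln ((1 - e1) / (1 - e2)) - sg * ln (((1 - e1) * e2) / ((1 - e2) * e1)).
Proof.
move=> h1 h12 h2.
have p1 : 0 < 1 - e1 by lra.
have p2 : 0 < 1 - e2 by lra.
have q2 : 0 < e2 by lra.
rewrite !ln_div ?posrE ?mulr_gt0 // !lnM ?posrE //; ring.
Qed.

Lemma Lpos (e1 e2 : R) : 0 < e1 -> e1 < e2 -> e2 < 1 ->
  0 < ln (((1 - e1) * e2) / ((1 - e2) * e1)).
Proof.
move=> h1 h12 h2; apply: ln_gt0.
have p : 0 < (1 - e2) * e1 by apply: mulr_gt0; lra.
rewrite ltr_pdivlMr // mul1r; nra.
Qed.

Lemma phi_le (e1 e2 sg : R) : 0 < e1 -> e1 < e2 -> e2 < 1 ->
  sg <= phi e1 e2 ->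
  0 <= (sg * ln e1 + (1 - sg) * ln (1 - e1)) - (sg * ln e2 + (1 - sg) * ln (1 - e2)).
Proof.
move=> h1 h12 h2; rewrite /phi Tdiff // ler_pdivlMr ?Lpos //; lra.
Qed.

Lemma phi_ge (e1 e2 sg : R) : 0 < e1 -> e1 < e2 -> e2 < 1 ->
  phi e1 e2 <= sg ->
  (sg * ln e1 + (1 - sg) * ln (1 - e1)) - (sg * ln e2 + (1 - sg) * ln (1 - e2)) <= 0.
Proof.
move=> h1 h12 h2; rewrite /phi Tdiff // ler_pdivrMr ?Lpos //; lra.
Qed.


Lemma ln2_gt0 : 0 < ln (2 : R).
Proof. by apply: ln_gt0; lra. Qed.

Lemma term_eq (P w wa wb : R) : wa + wb = 1 ->
  (if P * w == 0 then 0 else P * w / 2 * log2 (P * w / ((P * wa + P * wb) / 2))) =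
  P * w / 2 * ln (2 * w) / ln 2.
Proof.
move=> hw; have [h|h] := eqVneq (P * w) 0.
  by rewrite h !mul0r.
have hP : P != 0 by apply: contraNneq h => ->; rewrite mul0r.
have -> : P * wa + P * wb = P by rewrite -mulrDr hw mulr1.
have -> : P * w / (P / 2) = 2 * w by field.
by rewrite /log2 mulrA.
Qed.

Lemma Icap_mix n (p e : 'I_n -> R) :
  Icap (mixBSC p e) = (\sum_i Vb (p i) (e i)) / ln 2.
Proof.
rewrite /Icap exchange_big /=.
transitivity (\sum_(y : 'I_n * bool) Vb (p y.1) (e y.1) / ln 2 / 2).
  apply: eq_bigr => -[i b] _; rewrite big_bool /=.
  have s1 : e i + (1 - e i) = 1 by ring.
  have s2 : (1 - e i) + e i = 1 by ring.
  case: b => /=; rewrite !(term_eq _ _ _ _ s1, term_eq _ _ _ _ s2) /Vb.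
    set L := ln 2; set a := ln (2 * (1 - e i)); set b := ln (2 * e i); ring.
  set L := ln 2; set a := ln (2 * (1 - e i)); set b := ln (2 * e i); ring.
rewrite -(pair_bigA _ (fun i (_ : bool) => Vb (p i) (e i) / ln 2 / 2)) /=.
rewrite mulr_suml; apply: eq_bigr => i _; rewrite big_bool /=.
set L := ln 2; set V := Vb _ _; field.
by rewrite gt_eqF // /L; apply: ln_gt0; lra.
Qed.


Lemma guardE (w x : R) : (if w == 0 then 0 else w * x) = w * x.
Proof. by case: eqP => // ->; rewrite mul0r. Qed.

Lemma wbnd (w x : R) : 0 <= w -> 0 <= x -> x <= 1 -> 0 <= w * x /\ w * x <= w.
Proof. move=> w0 x0 x1; split; [exact: mulr_ge0 | exact: ler_piMr]. Qed.

Lemma iext_mid m n (idx : nat -> nat) j : (2 <= j <= n)%N -> iext m n idx j = idx j.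
Proof.
move=> /andP[h1 h2]; rewrite /iext.
have -> : (j == 1%N) = false by apply/negbTE; rewrite neq_ltn h1 orbT.
by have -> : (j == n.+1) = false by apply/negbTE; rewrite neq_ltn ltnS h2.
Qed.

Lemma iext_1 m n (idx : nat -> nat) : iext m n idx 1 = 0%N.
Proof. by []. Qed.

Lemma iext_last m n (idx : nat -> nat) : (1 <= n)%N -> iext m n idx n.+1 = m.+1.
Proof. by move=> h; rewrite /iext eqxx; case: n h. Qed.

Lemma sext_mid n (s : nat -> R) j : (2 <= j <= n)%N -> sext n s j = s j.
Proof.
move=> /andP[h1 h2]; rewrite /sext.
have -> : (j == 1%N) = false by apply/negbTE; rewrite neq_ltn h1 orbT.
by have -> : (j == n.+1) = false by apply/negbTE; rewrite neq_ltn ltnS h2.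
Qed.

Lemma sext_1 n (s : nat -> R) : sext n s 1 = 0.
Proof. by []. Qed.

Lemma sext_last n (s : nat -> R) : sext n s n.+1 = 0.
Proof. by rewrite /sext eqxx orbT. Qed.

Lemma qext_in m (q : nat -> R) i : (1 <= i <= m)%N -> qext m q i = q i.
Proof. by rewrite /qext => ->. Qed.

Lemma qext_out m (q : nat -> R) i : (m < i)%N -> qext m q i = 0.
Proof. by rewrite /qext => h; case: ifP => // /andP[_ h']; move: (leq_trans h h'); rewrite ltnn. Qed.

Lemma sig_le m (sigma : nat -> R) :
  (forall i, (1 <= i)%N -> (i < m)%N -> sigma i < sigma i.+1) ->
  forall i j, (1 <= i)%N -> (i <= j)%N -> (j <= m)%N -> sigma i <= sigma j.
Proof.
move=> H i j h1 hij; rewrite -(subnKC hij); elim: (j - i)%N => [|d IH] hm.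
  by rewrite addn0.
rewrite addnS in hm *; apply: le_trans (IH (ltnW hm)) _; apply/ltW/H => //.
by rewrite (leq_trans h1) // leq_addr.
Qed.

Lemma sig_lt m (sigma : nat -> R) :
  (forall i, (1 <= i)%N -> (i < m)%N -> sigma i < sigma i.+1) ->
  forall i j, (1 <= i)%N -> (i < j)%N -> (j <= m)%N -> sigma i < sigma j.
Proof.
move=> H i j h1 hij hj; apply: (@le_lt_trans _ _ (sigma j.-1)).
  apply: (sig_le _ _ H) => //; first by rewrite -ltnS prednK // (leq_ltn_trans _ hij).
  by rewrite (leq_trans (leq_pred _)).
have hj1 : (0 < j)%N by rewrite (leq_ltn_trans _ hij).
rewrite -{2}(prednK hj1); apply: H; lia.
Qed.

Lemma idx_le n (idx : nat -> nat) :
  (forall j, (2 <= j)%N -> (j < n)%N -> (idx j < idx j.+1)%N) ->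
  forall i j, (2 <= i)%N -> (i <= j)%N -> (j <= n)%N -> (idx i <= idx j)%N.
Proof.
move=> H i j h1 hij; rewrite -(subnKC hij); elim: (j - i)%N => [|d IH] hm.
  by rewrite addn0.
rewrite addnS in hm *; apply: leq_trans (IH (ltnW hm)) _; apply/ltnW/H => //.
by rewrite (leq_trans h1) // leq_addr.
Qed.


Lemma sig_rng m (sigma : nat -> R) :
  0 <= sigma 1%N -> (forall i, (1 <= i)%N -> (i < m)%N -> sigma i < sigma i.+1) ->
  sigma m <= 1 / 2 -> forall t, (1 <= t <= m)%N -> 0 <= sigma t /\ sigma t <= 1 / 2.
Proof.
move=> s0 H sm t /andP[t1 tm]; split.
  by apply: le_trans s0 _; apply: (sig_le _ _ H).
by apply: le_trans _ sm; apply: (sig_le _ _ H).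
Qed.

Lemma idx_rng m n (q : nat -> R) idx s : (2 <= n)%N -> DQ_params m n q idx s ->
  forall j, (2 <= j <= n)%N -> (1 <= idx j)%N /\ (idx j <= m)%N.
Proof.
move=> n2 [i2 [H [im _]]] j /andP[j2 jn]; split.
  by apply: leq_trans i2 _; apply: (idx_le _ _ H).
by apply: leq_trans im; apply: (idx_le _ _ H).
Qed.

Lemma DQ_bnd m n (q sigma : nat -> R) idx s :
  (2 <= n)%N -> (forall i, (1 <= i <= m)%N -> 0 < q i) ->
  0 <= sigma 1%N -> (forall i, (1 <= i)%N -> (i < m)%N -> sigma i < sigma i.+1) ->
  sigma m <= 1 / 2 -> DQ_params m n q idx s ->
  forall j, (1 <= j <= n)%N ->
  0 <= DQ_pe m n q sigma idx s j /\ DQ_pe m n q sigma idx s j <= DQ_p m n q idx s j.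
Proof.
move=> n2 hq s0 sH sm par j /andP[j1 jn].
have srng := @sig_rng m sigma s0 sH sm.
have irng := @idx_rng m n q idx s n2 par.
have [_ [_ [_ hs]]] := par.
rewrite /DQ_pe /DQ_p !guardE.
have T3 : forall t, 0 <= qext m q t * sigma t /\ qext m q t * sigma t <= qext m q t.
  move=> t; rewrite /qext; case: ifP => ht; last by rewrite mul0r; split.
  have [a b] := srng t ht; apply: wbnd; [exact: ltW (hq t ht) | lra | lra].
have T1 : 0 <= sext n s j * sigma (iext m n idx j) /\
          sext n s j * sigma (iext m n idx j) <= sext n s j.
  have [->|j1'] := eqVneq j 1%N; first by rewrite sext_1 mul0r; split.
  have j2 : (2 <= j <= n)%N by rewrite jn andbT ltn_neqAle eq_sym j1' j1.
  rewrite sext_mid // iext_mid //.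
  have /andP[a b] := hs j j2; have [c d] := irng j j2.
  have [e f] := srng (idx j) (introT andP (conj c d)).
  apply: wbnd; lra.
have T2 : 0 <= (qext m q (iext m n idx j.+1) - sext n s j.+1) * sigma (iext m n idx j.+1) /\
          (qext m q (iext m n idx j.+1) - sext n s j.+1) * sigma (iext m n idx j.+1) <=
          qext m q (iext m n idx j.+1) - sext n s j.+1.
  have [->|jn'] := eqVneq j n.
    rewrite iext_last ?(leq_trans _ n2) // sext_last qext_out // subr0 mul0r; split => //.
  have j2 : (2 <= j.+1 <= n)%N by rewrite ltnS j1 ltn_neqAle jn' jn.
  rewrite sext_mid // iext_mid //.
  have /andP[a b] := hs _ j2; have [c d] := irng _ j2.
  have [e f] := srng (idx j.+1) (introT andP (conj c d)).
  rewrite qext_in ?c ?d //.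
  apply: wbnd; lra.
have S0 : 0 <= \sum_((iext m n idx j).+1 <= t < iext m n idx j.+1) qext m q t * sigma t.
  by apply: sumr_ge0 => t _; case: (T3 t).
have S1 : \sum_((iext m n idx j).+1 <= t < iext m n idx j.+1) qext m q t * sigma t <=
          \sum_((iext m n idx j).+1 <= t < iext m n idx j.+1) qext m q t.
  by apply: ler_sum => t _; case: (T3 t).
case: T1 => a b; case: T2 => c d; split; lra.
Qed.


Lemma sext_upd n (s : nat -> R) k v j : (2 <= k <= n)%N ->
  sext n (s_upd s k v) j = if j == k then v else sext n s j.
Proof.
move=> hk; have [->|hjk] := eqVneq j k.
  by rewrite (@sext_mid n (s_upd s k v) k hk) /s_upd !eqxx.
by rewrite /sext /s_upd (negbTE hjk).
Qed.

Lemma DQ_p_upd m n (q : nat -> R) idx s k v j : (2 <= k <= n)%N ->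
  DQ_p m n q idx (s_upd s k v) j = DQ_p m n q idx s j +
    (if j.+1 == k then s k - v else 0) + (if j == k then v - s k else 0).
Proof.
move=> hk; rewrite /DQ_p !(sext_upd _ _ _ _ _ hk).
have sk : sext n s k = s k by rewrite (@sext_mid n s k hk).
have [e1|e1] := eqVneq j.+1 k; have [e2|e2] := eqVneq j k.
- by move: e1; rewrite e2 => /eqP; rewrite eqn_leq ltnn.
- by rewrite e1 sk; ring.
- by rewrite e2 sk; ring.
- by ring.
Qed.

Lemma DQ_pe_upd m n (q sigma : nat -> R) idx s k v j : (2 <= k <= n)%N ->
  DQ_pe m n q sigma idx (s_upd s k v) j = DQ_pe m n q sigma idx s j +
    (if j.+1 == k then (s k - v) * sigma (idx k) else 0) +
    (if j == k then (v - s k) * sigma (idx k) else 0).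
Proof.
move=> hk; rewrite /DQ_pe !guardE !(sext_upd _ _ _ _ _ hk).
have sk : sext n s k = s k by rewrite (@sext_mid n s k hk).
have ik : iext m n idx k = idx k by rewrite (@iext_mid m n idx k hk).
have [e1|e1] := eqVneq j.+1 k; have [e2|e2] := eqVneq j k.
- by move: e1; rewrite e2 => /eqP; rewrite eqn_leq ltnn.
- by rewrite e1 sk ik; ring.
- by rewrite e2 sk ik; ring.
- by ring.
Qed.


Lemma sum_diff n (f g : 'I_n -> R) (i0 i1 : 'I_n) : i0 != i1 ->
  (forall j, j != i0 -> j != i1 -> f j = g j) ->
  \sum_j f j = \sum_j g j + (f i0 - g i0) + (f i1 - g i1).
Proof.
move=> h01 H.
rewrite (bigD1 i0) //= [X in _ = X + _ + _](bigD1 i0) //=.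
rewrite (bigD1 i1) 1?eq_sym //= [X in _ = _ + X + _ + _](bigD1 i1) 1?eq_sym //=.
rewrite (eq_bigr g); last by move=> j /andP[a b]; apply: H.
ring.
Qed.

Lemma params_upd m n (q : nat -> R) idx s k (v : R) : (2 <= k <= n)%N ->
  0 <= v <= q (idx k) -> DQ_params m n q idx s -> DQ_params m n q idx (s_upd s k v).
Proof.
move=> hk hv [a [b [c d]]]; split => //; split => //; split => // j hj.
by rewrite /s_upd; case: eqP => [->|_]; [exact: hv | exact: d].
Qed.


Lemma part3 m n (q sigma : nat -> R) idx s k (v : R) :
  (2 <= n)%N -> (forall i, (1 <= i <= m)%N -> 0 < q i) ->
  0 <= sigma 1%N -> (forall i, (1 <= i)%N -> (i < m)%N -> sigma i < sigma i.+1) ->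
  sigma m <= 1 / 2 -> DQ_params m n q idx s -> (2 <= k <= n)%N ->
  0 <= v <= q (idx k) ->
  (forall j, (1 <= j <= n)%N -> 0 < DQ_p m n q idx s j) ->
  0 < DQ_eps m n q sigma idx s k.-1 ->
  DQ_eps m n q sigma idx s k.-1 < DQ_eps m n q sigma idx s k ->
  DQ_eps m n q sigma idx s k < 1 / 2 ->
  s k - v != 0 ->
  0 <= (s k - v) *
    ((sigma (idx k) * ln (DQ_eps m n q sigma idx s k.-1) +
      (1 - sigma (idx k)) * ln (1 - DQ_eps m n q sigma idx s k.-1)) -
     (sigma (idx k) * ln (DQ_eps m n q sigma idx s k) +
      (1 - sigma (idx k)) * ln (1 - DQ_eps m n q sigma idx s k))) ->
  Icap (DQ m n q sigma idx s) < Icap (DQ m n q sigma idx (s_upd s k v)).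
Proof.
move=> n2 hq s0 sH sm par hk hv pp.
set e1 := DQ_eps m n q sigma idx s k.-1.
set e2 := DQ_eps m n q sigma idx s k.
set sg := sigma (idx k).
set d := s k - v.
move=> e10 e12 e2h d0 hT.
have par' := @params_upd m n q idx s k v hk hv par.
set s' := s_upd s k v.
have k1 : (1 <= k.-1 <= n)%N by lia.
have kk : (1 <= k <= n)%N by lia.
have ek : k.-1.+1 = k by lia.
have f1 : (k.-1 == k) = false by apply/negbTE; lia.
have f2 : (k.+1 == k) = false by apply/negbTE; lia.
set a1 := DQ_p m n q idx s k.-1.
set a2 := DQ_p m n q idx s k.
set b1 := DQ_pe m n q sigma idx s k.-1.
set b2 := DQ_pe m n q sigma idx s k.
have a10 : 0 < a1 by apply: pp.
have a20 : 0 < a2 by apply: pp.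
have hb1 : b1 = e1 * a1 by rewrite /e1 /DQ_eps -/a1 -/b1 divfK // gt_eqF.
have hb2 : b2 = e2 * a2 by rewrite /e2 /DQ_eps -/a2 -/b2 divfK // gt_eqF.
have P1 : DQ_p m n q idx s' k.-1 = a1 + d.
  by rewrite /s' DQ_p_upd // ek eqxx f1 addr0.
have P2 : DQ_p m n q idx s' k = a2 - d.
  by rewrite /s' DQ_p_upd // eqxx f2 addr0 -/a2 /d; ring.
have Q1 : DQ_pe m n q sigma idx s' k.-1 = e1 * a1 + d * sg.
  by rewrite /s' DQ_pe_upd // ek eqxx f1 addr0 -/b1 hb1.
have Q2 : DQ_pe m n q sigma idx s' k = e2 * a2 - d * sg.
  by rewrite /s' DQ_pe_upd // eqxx f2 addr0 -/b2 hb2 /d /sg; ring.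
have [B10 B1A] := @DQ_bnd m n q sigma idx s' n2 hq s0 sH sm par' _ k1.
have [B20 B2A] := @DQ_bnd m n q sigma idx s' n2 hq s0 sH sm par' _ kk.
rewrite P1 Q1 in B10 B1A; rewrite P2 Q2 in B20 B2A.
have := @core a1 a2 e1 e2 d sg a10 a20 ltac:(apply/andP; split; lra)
  ltac:(apply/andP; split; lra) ltac:(by rewrite lt_eqF) d0 B10 B1A B20 B2A hT.
move=> C.
rewrite /DQ !Icap_mix ltr_pM2r ?invr_gt0 ?ln2_gt0 //.
have o0 : (k.-2 < n)%N by move: hk; clear; lia.
have o1 : (k.-1 < n)%N by move: hk; clear; lia.
rewrite (@sum_diff n (fun j => Vb (DQ_p m n q idx s' j.+1) (DQ_eps m n q sigma idx s' j.+1))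
   (fun j => Vb (DQ_p m n q idx s j.+1) (DQ_eps m n q sigma idx s j.+1)) (Ordinal o0) (Ordinal o1)).
- rewrite /=.
  have e0 : k.-2.+1 = k.-1 by move: hk; clear; lia.
  rewrite e0 ek /DQ_eps P1 Q1 P2 Q2 -/a1 -/a2 -/b1 -/b2.
  have -> : b1 / a1 = e1 by [].
  have -> : b2 / a2 = e2 by [].
  lra.
- by apply/eqP => /(congr1 val) /=; move: hk; clear; lia.
move=> j hj0 hj1.
have g0 : (j.+2 == k) = false.
  apply/negbTE; apply: contra hj0 => /eqP h; apply/eqP/val_inj => /=; move: hk h; clear; lia.
have g1 : (j.+1 == k) = false.
  apply/negbTE; apply: contra hj1 => /eqP h; apply/eqP/val_inj => /=; move: hk h; clear; lia.
by rewrite /DQ_eps /s' !DQ_p_upd // !DQ_pe_upd // g0 g1 !addr0.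
Qed.

End Aux.

Lemma sum_nat_ge (R : realType) (F : nat -> R) a b t : (a <= t < b)%N ->
  (forall i, 0 <= F i) -> F t <= \sum_(a <= i < b) F i.
Proof.
move=> /andP[h1 h2] hF.
rewrite (@big_cat_nat _ _ _ t) //=; last exact: ltnW.
rewrite [X in _ <= _ + X]big_ltn //.
have A : 0 <= \sum_(a <= i < t) F i by apply: sumr_ge0.
have B : 0 <= \sum_(t.+1 <= i < b) F i by apply: sumr_ge0.
lra.
Qed.

Lemma part1 (R : realType) m n (q sigma : nat -> R) idx s k :
  (2 <= n)%N -> (n < m)%N -> (forall i, (1 <= i <= m)%N -> 0 < q i) ->
  0 <= sigma 1%N -> (forall i, (1 <= i)%N -> (i < m)%N -> sigma i < sigma i.+1) ->
  sigma m <= 1 / 2 -> DQ_params m n q idx s -> PstarDegradation m n q sigma idx s ->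
  (2 <= k <= n)%N ->
  DQ_eps m n q sigma idx s k.-1 = 0 ->
  k = 2%N /\ sigma 1%N = 0 /\ DQ_p m n q idx s 1%N = q 1%N /\
  ((idx 2%N = 2%N /\ s 2%N = q 2%N) \/ (idx 2%N = 1%N /\ s 2%N = 0)).
Proof.
move=> n2 nm hq s0 sH sm par [[pp [e0 [eH _]]] [_ H3]] hk ek.
have k2 : k = 2%N.
  apply/eqP; rewrite eqn_leq; have /andP[-> _] := hk; rewrite andbT leqNgt.
  apply/negP => k3.
  have := @sig_lt R n (DQ_eps m n q sigma idx s) eH 1%N k.-1 (leqnn 1)
    ltac:(move: k3; clear; lia) ltac:(move: hk; clear; lia).
  rewrite ek; lra.
split => //; subst k; move: ek => /= ek.
have p1 : 0 < DQ_p m n q idx s 1 := pp 1%N ltac:(move: n2; clear; lia).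
have pe0 : DQ_pe m n q sigma idx s 1 = 0.
  by move: ek; rewrite /DQ_eps => /eqP; rewrite mulf_eq0 invr_eq0 (gt_eqF p1) orbF => /eqP.
have h22 : (2 <= 2 <= n)%N by rewrite leqnn n2.
have [i21 i2m] := @idx_rng R m n q idx s n2 par 2 h22.
have [_ [_ [_ hs]]] := par.
have /andP[s20 s2q] := hs 2%N h22.
have srng := @sig_rng R m sigma s0 sH sm.
have T3 : forall t, 0 <= qext m q t * sigma t.
  move=> t; rewrite /qext; case: ifP => ht; last by rewrite mul0r.
  have [a b] := srng t ht; apply: mulr_ge0 => //; exact: ltW (hq t ht).
have pdef : DQ_p m n q idx s 1 = (q (idx 2%N) - s 2%N) + \sum_(1 <= t < idx 2%N) qext m q t.
  rewrite /DQ_p iext_1 sext_1 (@iext_mid m n idx 2 h22) (@sext_mid R n s 2 h22).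
  by rewrite (@qext_in R m q (idx 2%N)) ?i21 ?i2m // add0r.
have pedef : DQ_pe m n q sigma idx s 1 = (q (idx 2%N) - s 2%N) * sigma (idx 2%N) +
    \sum_(1 <= t < idx 2%N) qext m q t * sigma t.
  rewrite /DQ_pe !guardE iext_1 sext_1 (@iext_mid m n idx 2 h22) (@sext_mid R n s 2 h22).
  by rewrite (@qext_in R m q (idx 2%N)) ?i21 ?i2m // mul0r add0r.
rewrite pdef; move: pe0; rewrite pedef.
have [sg20 _] := srng (idx 2%N) (introT andP (conj i21 i2m)).
have w0 : 0 <= (q (idx 2%N) - s 2%N) * sigma (idx 2%N) by apply: mulr_ge0 => //; lra.
have q1 := hq 1%N ltac:(move: nm n2; clear; lia).
have q2 := hq 2%N ltac:(move: nm n2; clear; lia).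
have s12 := sH 1%N (leqnn 1) ltac:(move: nm n2; clear; lia).
have [i2big|i2small] := leqP 3 (idx 2%N).
  have := @sum_nat_ge R (fun t => qext m q t * sigma t) 1 (idx 2%N) 2
    ltac:(move: i2big; clear; lia) T3.
  rewrite /= (@qext_in R m q 2 ltac:(move: nm n2; clear; lia)).
  move=> h; have : 0 < q 2%N * sigma 2%N by apply: mulr_gt0; lra.
  move=> h' pe0; exfalso; lra.
have [e2|e1] : idx 2%N = 2%N \/ idx 2%N = 1%N by move: i21 i2small; clear; lia.
  rewrite e2 big_nat1 (@qext_in R m q 1 ltac:(move: nm n2; clear; lia)).
  move: w0; rewrite e2 => w0 pe0.
  have a : 0 <= q 1%N * sigma 1%N by apply: mulr_ge0; lra.
  have b : q 1%N * sigma 1%N = 0 by lra.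
  have sg1 : sigma 1%N = 0.
    by move: b => /eqP; rewrite mulf_eq0 (gt_eqF q1) /= => /eqP.
  have c : (q 2%N - s 2%N) * sigma 2%N = 0 by lra.
  have ss : s 2%N = q 2%N.
    move: c => /eqP; rewrite mulf_eq0 => /orP[/eqP c|/eqP c]; lra.
  split => //; split; last by left.
  rewrite ss big_nat1 (@qext_in R m q 1 ltac:(move: nm n2; clear; lia)); ring.
have s2z : s 2%N = 0.
  have h := H3 1%N ltac:(move: n2; clear; lia).
  move: h; rewrite /= iext_1 (@iext_mid m n idx 2 h22) e1 => /(_ erefl) [h _].
  by move: h; rewrite sext_1 (@sext_mid R n s 2 h22); apply.
rewrite e1 big_geq // s2z subr0 => pe0.
move: w0; rewrite e1 s2z subr0 => w0.
have sg1 : sigma 1%N = 0.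
  have : q 1%N * sigma 1%N = 0 by lra.
  by move=> /eqP; rewrite mulf_eq0 (gt_eqF q1) /= => /eqP.
split => //; split; last by right.
by rewrite big_geq // addr0.
Qed.

Lemma part2 (R : realType) m n (q sigma : nat -> R) idx s k :
  (2 <= n)%N -> (n < m)%N -> (forall i, (1 <= i <= m)%N -> 0 < q i) ->
  0 <= sigma 1%N -> (forall i, (1 <= i)%N -> (i < m)%N -> sigma i < sigma i.+1) ->
  sigma m <= 1 / 2 -> DQ_params m n q idx s -> PstarDegradation m n q sigma idx s ->
  (2 <= k <= n)%N ->
  DQ_eps m n q sigma idx s k = 1 / 2 ->
  k = n /\ sigma m = 1 / 2 /\ DQ_p m n q idx s n = q m /\
  ((idx n = m.-1 /\ s n = 0) \/ (idx n = m /\ s n = q m)).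
Proof.
move=> n2 nm hq s0 sH sm par [[pp [e0 [eH en]]] [_ H3]] hk ek.
have kn : k = n.
  apply/eqP; rewrite eqn_leq; have /andP[_ ->] := hk; rewrite /= leqNgt.
  apply/negP => k3.
  have := @sig_lt R n (DQ_eps m n q sigma idx s) eH k n
    ltac:(move: hk; clear; lia) k3 (leqnn n).
  rewrite ek; move: en => /=; lra.
split => //; subst k.
have pn : 0 < DQ_p m n q idx s n := pp n ltac:(move: n2; clear; lia).
have pe0 : DQ_pe m n q sigma idx s n = DQ_p m n q idx s n / 2.
  have pne : DQ_p m n q idx s n != 0 by rewrite gt_eqF.
  have := divfK pne (DQ_pe m n q sigma idx s n).
  move: ek; rewrite /DQ_eps => ->; lra.
have hnn : (2 <= n <= n)%N by rewrite leqnn n2.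
have [in1 inm] := @idx_rng R m n q idx s n2 par n hnn.
have [_ [_ [_ hs]]] := par.
have /andP[sn0 snq] := hs n hnn.
have srng := @sig_rng R m sigma s0 sH sm.
have n1 : (1 <= n)%N by move: n2; clear; lia.
have pdef : DQ_p m n q idx s n = s n + \sum_((idx n).+1 <= t < m.+1) qext m q t.
  rewrite /DQ_p (@iext_mid m n idx n hnn) (@sext_mid R n s n hnn) (@iext_last m n idx n1).
  by rewrite sext_last (@qext_out R m q m.+1) // subrr addr0.
have pedef : DQ_pe m n q sigma idx s n = s n * sigma (idx n) +
    \sum_((idx n).+1 <= t < m.+1) qext m q t * sigma t.
  rewrite /DQ_pe !guardE (@iext_mid m n idx n hnn) (@sext_mid R n s n hnn) (@iext_last m n idx n1).
  by rewrite sext_last (@qext_out R m q m.+1) // subrr mul0r addr0.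
set F := fun t => qext m q t * (1 / 2 - sigma t).
have F0 : forall t, 0 <= F t.
  move=> t; rewrite /F /qext; case: ifP => ht; last by rewrite mul0r.
  have [a b] := srng t ht; apply: mulr_ge0; [exact: ltW (hq t ht) | lra].
have sumF : \sum_((idx n).+1 <= t < m.+1) F t =
   (\sum_((idx n).+1 <= t < m.+1) qext m q t) / 2 -
   \sum_((idx n).+1 <= t < m.+1) qext m q t * sigma t.
  rewrite mulr_suml -sumrB; apply: eq_bigr => t _; rewrite /F; ring.
have [snr1 snr2] := srng (idx n) (introT andP (conj in1 inm)).
have X0 : 0 <= s n * (1 / 2 - sigma (idx n)) by apply: mulr_ge0; lra.
have key : s n * (1 / 2 - sigma (idx n)) + \sum_((idx n).+1 <= t < m.+1) F t = 0.
  rewrite sumF; move: pe0; rewrite pedef pdef => pe0; lra.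
have S0 : 0 <= \sum_((idx n).+1 <= t < m.+1) F t by apply: sumr_ge0.
have qm := hq m ltac:(move: nm n2; clear; lia).
have [ibig|ism] := leqP m (idx n).
  have im : idx n = m by apply/eqP; rewrite eqn_leq inm ibig.
  move: key; rewrite im big_geq // addr0 => key.
  have sp : 0 < s n by move: pn; rewrite pdef im big_geq // addr0.
  have sgm : sigma m = 1 / 2.
    move: key => /eqP; rewrite mulf_eq0 (gt_eqF sp) /= subr_eq0 => /eqP; done.
  have snqm : s n = q m.
    have h := H3 n ltac:(move: n2; clear; lia).
    move: h; rewrite /= (@iext_last m n idx n1) (@iext_mid m n idx n hnn) im => /(_ erefl) [_ h].
    move: h; rewrite sext_last (@qext_out R m q m.+1) // (@sext_mid R n s n hnn).
    by rewrite (@qext_in R m q m ltac:(move: nm n2; clear; lia)); apply.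
  split => //; split; last by right.
  by rewrite pdef im big_geq // addr0.
have sg1 := @sig_lt R m sigma sH m.-1 m ltac:(move: nm n2; clear; lia)
   ltac:(move: nm n2; clear; lia) (leqnn m).
have qm1 := hq m.-1 ltac:(move: nm n2; clear; lia).
have [e1|ism2] : idx n = m.-1 \/ (idx n < m.-1)%N by move: ism; clear; lia.
  have em : (m.-1).+1 = m by move: nm n2; clear; lia.
  move: key; rewrite e1 em big_nat1 /F (@qext_in R m q m ltac:(move: nm n2; clear; lia)) => key.
  have a : 0 <= q m * (1 / 2 - sigma m) by apply: mulr_ge0; lra.
  move: X0; rewrite e1 => X0.
  have b : s n * (1 / 2 - sigma m.-1) = 0 by lra.
  have snz : s n = 0.
    by move: b => /eqP; rewrite mulf_eq0 => /orP[/eqP //|/eqP b]; lra.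
  have sgm : sigma m = 1 / 2.
    have c : q m * (1 / 2 - sigma m) = 0 by lra.
    by move: c => /eqP; rewrite mulf_eq0 (gt_eqF qm) /= subr_eq0 => /eqP.
  split => //; split; last by left.
  rewrite pdef e1 em big_nat1 snz add0r.
  exact: (@qext_in R m q m ltac:(move: nm n2; clear; lia)).
exfalso.
have := @sum_nat_ge R F (idx n).+1 m.+1 m.-1 ltac:(move: ism2 nm; clear; lia) F0.
rewrite /F (@qext_in R m q m.-1 ltac:(move: nm n2; clear; lia)) => h.
have : 0 < q m.-1 * (1 / 2 - sigma m.-1) by apply: mulr_gt0; lra.
move=> h'; lra.
Qed.

Theorem lemma8 (R : realType) (m n : nat) (q sigma : nat -> R)
    (idx : nat -> nat) (s : nat -> R) (k : nat) :
  (2 <= n)%N -> (n < m)%N ->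
  (forall i, (1 <= i <= m)%N -> 0 < q i) ->
  \sum_(i < m) q i.+1 = 1 ->
  0 <= sigma 1%N -> (forall i, (1 <= i)%N -> (i < m)%N -> sigma i < sigma i.+1) ->
  sigma m <= 1 / 2 ->
  inBstar m (Qchan m q sigma) ->
  DQ_params m n q idx s ->
  PstarDegradation m n q sigma idx s ->
  (2 <= k <= n)%N ->
  let p := DQ_p m n q idx s in
  let eps := DQ_eps m n q sigma idx s in
  (eps k.-1 = 0 ->
     k = 2%N /\ sigma 1%N = 0 /\ p 1%N = q 1%N /\
     ((idx 2%N = 2%N /\ s 2%N = q 2%N) \/ (idx 2%N = 1%N /\ s 2%N = 0))) /\
  (eps k = 1 / 2 ->
     k = n /\ sigma m = 1 / 2 /\ p n = q m /\
     ((idx n = m.-1 /\ s n = 0) \/ (idx n = m /\ s n = q m))) /\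
  (0 < eps k.-1 -> eps k.-1 < eps k -> eps k < 1 / 2 ->
     (0 < s k -> sigma (idx k) <= phi (eps k.-1) (eps k) ->
        Icap (DQ m n q sigma idx (s_upd s k 0)) > Icap (DQ m n q sigma idx s)) /\
     (s k < q (idx k) -> sigma (idx k) >= phi (eps k.-1) (eps k) ->
        Icap (DQ m n q sigma idx (s_upd s k (q (idx k)))) > Icap (DQ m n q sigma idx s))).
Proof.
move=> n2 nm hq _ s0 sH sm _ par PS hk p eps.
split; first exact: (@part1 R m n q sigma idx s k n2 nm hq s0 sH sm par PS hk).
split; first exact: (@part2 R m n q sigma idx s k n2 nm hq s0 sH sm par PS hk).
move=> e10 e12 e2h.
have pp : forall j, (1 <= j <= n)%N -> 0 < DQ_p m n q idx s j.
  by case: PS => [[pp _] _].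
have hk2 : (2 <= k <= n)%N := hk.
have [i1 im] := @idx_rng R m n q idx s n2 par k hk2.
have qk : 0 < q (idx k) by apply: hq; rewrite i1 im.
have e2l : eps k < 1 by lra.
split.
  move=> sk0 sgle.
  apply: (@part3 R m n q sigma idx s k 0 n2 hq s0 sH sm par hk) => //.
  - by rewrite lexx ltW.
  - by rewrite subr0 gt_eqF.
  - apply: mulr_ge0; first by rewrite subr0 ltW.
    exact: (@phi_le R (eps k.-1) (eps k) (sigma (idx k)) e10 e12 e2l sgle).
move=> skq sgge.
apply: (@part3 R m n q sigma idx s k (q (idx k)) n2 hq s0 sH sm par hk) => //.
- by rewrite lexx ltW.
- by rewrite lt_eqF // subr_lt0.
- apply: mulr_le0; first by rewrite subr_le0 ltW.
  exact: (@phi_ge R (eps k.-1) (eps k) (sigma (idx k)) e10 e12 e2l sgge).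
Qed.
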